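(* Let $w=w_1\cdots w_n$ be a word of length $n\ge 2$ such that $w_i\ne w_{n-i+1}$ for some $i$. Then $f(w)\le 2n$.
   Context: A word of length $n$ is a sequence $w=w_1w_2\cdots w_n$ of letters (symbols). Let $[n]=\{1,\dots,n\}$. An $n$-grid is a function $G:[n]^2\to\Sigma$, where $\Sigma$ is an arbitrary set of letters. The $i$th row of $G$ contains $w$ if $G(i,j)=w_j$ for all $1\le j\le n$, or $G(i,j)=w_{n-j+1}$ for all $1\le j\le n$. The $j$th column contains $w$ if $G(i,j)=w_i$ for all $i$, or $G(i,j)=w_{n-i+1}$ for all $i$. The main diagonal contains $w$ if $G(i,i)=w_i$ for all $i$ or $G(i,i)=w_{n-i+1}$ for all $i$; the anti-diagonal contains $w$ if $G(i,n-i+1)=w_i$ for all $i$ or $G(i,n-i+1)=w_{n-i+1}$ for all $i$. Let $f(w,G)$ be the number of the $2n+2$ lines ($n$ rows, $n$ columns, $2$ diagonals) of $G$ that contain $w$, and $f(w)=\max_G f(w,G)$ over all $n$-grids $G$. *)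

(* Defs.v *)
From mathcomp Require Import all_boot.
Set Implicit Arguments. Unset Strict Implicit. Unset Printing Implicit Defensive.

(* Indices are 0-based: 'I_n stands for [n]; rev_ord i is n-i+1 in 1-based terms. *)
Section Grid.
Variables (Sigma : eqType) (n : nat).

Definition word := 'I_n -> Sigma.
Definition grid := 'I_n -> 'I_n -> Sigma.

Definition line_contains (w : word) (l : 'I_n -> Sigma) : bool :=
  [forall j, l j == w j] || [forall j, l j == w (rev_ord j)].

Definition row_contains (w : word) (G : grid) (i : 'I_n) : bool :=
  line_contains w (fun j => G i j).
Definition col_contains (w : word) (G : grid) (j : 'I_n) : bool :=
  line_contains w (fun i => G i j).
Definition diag_contains (w : word) (G : grid) : bool :=
  line_contains w (fun i => G i i).
Definition antidiag_contains (w : word) (G : grid) : bool :=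
  line_contains w (fun i => G i (rev_ord i)).

Definition f_wG (w : word) (G : grid) : nat :=
  #|[pred i | row_contains w G i]| + #|[pred j | col_contains w G j]|
  + diag_contains w G + antidiag_contains w G.

End Grid.

(* Main.v *)
Require Import Defs.
From mathcomp Require Import all_boot.
From mathcomp Require Import zify.

Section Aux.
Variables (Sigma : eqType) (n : nat) (w : word Sigma n).

Lemma line_lem (L : 'I_n -> Sigma) (i : 'I_n) : line_contains w L ->
  (L i = w i /\ L (rev_ord i) = w (rev_ord i)) \/
  (L i = w (rev_ord i) /\ L (rev_ord i) = w i).
Proof.
case/orP => /forallP H; [left|right]; split; apply/eqP; rewrite ?H //.
by have := H (rev_ord i); rewrite rev_ordK.
Qed.

Lemma cnt_lem (P : pred 'I_n) a b : a != b ->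
  (~~ P a) + (~~ P b) <= #|[predC P]|.
Proof.
move=> ab; case Pa: (P a); case Pb: (P b) => //=.
- by apply/card_gt0P; exists b; rewrite inE /= -topredE /= Pb.
- by apply/card_gt0P; exists a; rewrite inE /= -topredE /= Pa.
- apply: leq_trans (_ : #|[set a; b]| <= _); first by rewrite cards2 ab.
  apply: subset_leq_card; apply/subsetP => x; rewrite !inE.
  by case/orP => /eqP ->; rewrite /= -topredE /= ?Pa ?Pb.
Qed.

End Aux.

Theorem lemma11 (Sigma : eqType) (n : nat) (w : word Sigma n) :
  2 <= n ->
  (exists i : 'I_n, w i != w (rev_ord i)) ->
  forall G : grid Sigma n, f_wG w G <= 2 * n.
Proof.
move=> _ [i0 ne] G.
set k := rev_ord i0.
have ik : i0 != k by apply: contraNneq ne => h; rewrite -/k -h.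
have ab : w i0 <> w k by apply/eqP.
have kk : rev_ord k = i0 by rewrite rev_ordK.
rewrite /f_wG.
set P := [pred i | row_contains w G i].
set Q := [pred j | col_contains w G j].
have cP := @cnt_lem n P i0 k ik. have cQ := @cnt_lem n Q i0 k ik.
have eP := cardC P. have eQ := cardC Q.
rewrite card_ord in eP eQ.
have T1 : ~ [/\ P i0, Q k & diag_contains w G].
  case=> /(@line_lem _ _ w _ i0) h1 /(@line_lem _ _ w _ i0) h2 /(@line_lem _ _ w _ i0) h3.
  rewrite -/k ?kk in h1 h2 h3; intuition congruence.
have T2 : ~ [/\ Q i0, P k & diag_contains w G].
  case=> /(@line_lem _ _ w _ i0) h1 /(@line_lem _ _ w _ i0) h2 /(@line_lem _ _ w _ i0) h3.
  rewrite -/k ?kk in h1 h2 h3; intuition congruence.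
have T3 : ~ [/\ P i0, Q i0 & antidiag_contains w G].
  case=> /(@line_lem _ _ w _ i0) h1 /(@line_lem _ _ w _ i0) h2 /(@line_lem _ _ w _ i0) h3.
  rewrite -/k ?kk in h1 h2 h3; intuition congruence.
have T4 : ~ [/\ Q k, P k & antidiag_contains w G].
  case=> /(@line_lem _ _ w _ i0) h1 /(@line_lem _ _ w _ i0) h2 /(@line_lem _ _ w _ i0) h3.
  rewrite -/k ?kk in h1 h2 h3; intuition congruence.
have hP : #|P| + ((~~ P i0) + (~~ P k)) <= n by apply: (leq_trans _ (eq_leq eP)); rewrite leq_add2l.
have hQ : #|Q| + ((~~ Q i0) + (~~ Q k)) <= n by apply: (leq_trans _ (eq_leq eQ)); rewrite leq_add2l.
set p := #|P| in hP *. set q := #|Q| in hQ *. clearbody p q.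
move: hP hQ T1 T2 T3 T4; clear cP cQ eP eQ.
case: (P i0); case: (P k); case: (Q i0); case: (Q k);
case: (diag_contains w G); case: (antidiag_contains w G) => /= hP hQ T1 T2 T3 T4;
first [lia | exfalso; first [exact: T1 | exact: T2 | exact: T3 | exact: T4]].
Qed.
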